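(* Let $\Psi\in\mathcal P_p$, $m\ge p$, $q\in\{1,2,\ldots\}$, $N=n+p+qm+1$, $\beta=(q/N)^{1/q}$, $\gamma=n/N$, and let $\hat\Sigma$ be the power inverse Wishart MAP estimator with prior parameters $(\Psi,m,q)$. Then, in the Loewner order on symmetric matrices, $$\beta\Psi\le\hat\Sigma\le\beta\Psi+\gamma S.$$ In particular $\beta\Psi_{ii}\le\hat\Sigma_{ii}\le\beta\Psi_{ii}+\gamma S_{ii}$ for every $i$.
   Context: $\mathcal P_p$ is the set of positive definite $p\times p$ real matrices; $A\le B$ means $B-A$ is positive semidefinite. Data $X_1,\ldots,X_n\in\mathbb R^p$, $\bar X=\frac1n\sum_iX_i$, $S=\frac1n\sum_i(X_i-\bar X)(X_i-\bar X)^\top$. The MAP estimator $\hat\Sigma$ is the $\Sigma$-component of the unique maximizer over $\mu\in\mathbb R^p$, $\Sigma\in\mathcal P_p$ of $|\Sigma|^{-n/2}\exp(-\tfrac12\sum_i(X_i-\mu)^\top\Sigma^{-1}(X_i-\mu))\cdot\exp(-\tfrac12\operatorname{tr}((\Psi^{-1/2}\Sigma\Psi^{-1/2})^{-q}))|\Sigma|^{-(qm+p+1)/2}$, with $\Psi^{1/2}$ the positive definite square root and $\Psi^{-1/2}=(\Psi^{1/2})^{-1}$. *)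

(* Defs.v *)
From HB Require Import structures.
From Stdlib Require Import Reals Lra ClassicalEpsilon FunctionalExtensionality.
From mathcomp Require Import all_boot all_algebra.

Set Implicit Arguments.
Unset Strict Implicit.
Unset Printing Implicit Defensive.

Definition R_eqb (x y : R) : bool := if Req_EM_T x y then true else false.

Lemma R_eqP : Equality.axiom R_eqb.
Proof. move=> x y; rewrite /R_eqb; case: Req_EM_T => h; by constructor. Qed.

HB.instance Definition _ := hasDecEq.Build R R_eqP.

Definition R_find (P : pred R) (_ : nat) : option R :=
  match excluded_middle_informative (exists x, P x) with
  | left h => Some (proj1_sig (constructive_indefinite_description _ h))
  | right _ => None
  end.

Lemma R_find_correct P n x : R_find P n = Some x -> P x.
Proof.
rewrite /R_find; case: excluded_middle_informative => // h [<-].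
exact: (proj2_sig (constructive_indefinite_description _ h)).
Qed.

Lemma R_find_complete (P : pred R) : (exists x, P x) -> exists n, R_find P n.
Proof. move=> h; exists 0%N; rewrite /R_find; by case: excluded_middle_informative. Qed.

Lemma R_find_ext (P Q : pred R) : P =1 Q -> R_find P =1 R_find Q.
Proof. move=> h; have -> : P = Q by apply: functional_extensionality. by []. Qed.

HB.instance Definition _ := hasChoice.Build R R_find_correct R_find_complete R_find_ext.

Lemma R_addA : ssrfun.associative Rplus. Proof. move=> *; ring. Qed.
Lemma R_addC : ssrfun.commutative Rplus. Proof. move=> *; ring. Qed.
Lemma R_add0 : ssrfun.left_id R0 Rplus. Proof. move=> *; ring. Qed.
Lemma R_addN : ssrfun.left_inverse R0 Ropp Rplus. Proof. move=> *; ring. Qed.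

HB.instance Definition _ := GRing.isZmodule.Build R R_addA R_addC R_add0 R_addN.

Lemma R_mulA : ssrfun.associative Rmult. Proof. move=> *; ring. Qed.
Lemma R_mulC : ssrfun.commutative Rmult. Proof. move=> *; ring. Qed.
Lemma R_mul1 : ssrfun.left_id R1 Rmult. Proof. move=> *; ring. Qed.
Lemma R_mulDl : ssrfun.left_distributive Rmult Rplus. Proof. move=> *; ring. Qed.
Lemma R_one_neq0 : (R1 : R) != R0.
Proof. by apply/eqP; exact R1_neq_R0. Qed.

HB.instance Definition _ :=
  GRing.Zmodule_isComNzRing.Build R R_mulA R_mulC R_mul1 R_mulDl R_one_neq0.

Definition R_unit : {pred R} := fun x => x != R0.
Definition R_inv (x : R) : R := if x == R0 then x else Rinv x.

Lemma R_mulVx : {in R_unit, ssrfun.left_inverse R1 R_inv Rmult}.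
Proof.
move=> x; rewrite /R_unit /R_inv unfold_in => Hx; rewrite (negPf Hx).
apply: Rinv_l => h; by rewrite h eqxx in Hx.
Qed.

Lemma R_unitPl (x y : R) : Rmult y x = R1 -> R_unit x.
Proof.
move=> h; rewrite /R_unit; apply/eqP => hx.
rewrite hx Rmult_0_r in h; exact: R1_neq_R0 (esym h).
Qed.

Lemma R_inv_out : {in predC R_unit, R_inv =1 id}.
Proof.
move=> x; rewrite /R_unit /R_inv !unfold_in /= negbK => /eqP ->.
by rewrite eqxx.
Qed.

HB.instance Definition _ := GRing.ComNzRing_hasMulInverse.Build R
  R_mulVx R_unitPl R_inv_out.

Local Open Scope ring_scope.

Definition symmetric (p : nat) (A : 'M[R]_p) : Prop := A^T = A.

Definition qform (p : nat) (A : 'M[R]_p) (v : 'cV[R]_p) : R :=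
  (v^T *m A *m v) ord0 ord0.

Definition posdef (p : nat) (A : 'M[R]_p) : Prop :=
  symmetric A /\ forall v : 'cV[R]_p, v <> 0 -> Rlt R0 (qform A v).

Definition possemidef (p : nat) (A : 'M[R]_p) : Prop :=
  symmetric A /\ forall v : 'cV[R]_p, Rle R0 (qform A v).

Definition loewner_le (p : nat) (A B : 'M[R]_p) : Prop := possemidef (B - A).

Definition sample_mean (p n : nat) (X : 'I_n -> 'cV[R]_p) : 'cV[R]_p :=
  (Rinv (INR n)) *: \sum_(i < n) X i.

Definition sample_cov (p n : nat) (X : 'I_n -> 'cV[R]_p) : 'M[R]_p :=
  (Rinv (INR n)) *:
    \sum_(i < n) ((X i - sample_mean X) *m (X i - sample_mean X)^T).

(* the posterior objective (likelihood times power inverse Wishart prior),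
   with Psi_inv_half = Psi^{-1/2}:
   |Sigma|^{-n/2} exp(-1/2 sum_i (X_i-mu)^T Sigma^{-1} (X_i-mu))
   * exp(-1/2 tr((Psi^{-1/2} Sigma Psi^{-1/2})^{-q})) * |Sigma|^{-(qm+p+1)/2} *)
Definition piw_posterior (p n q : nat) (m : R) (Psi_inv_half : 'M[R]_p)
    (X : 'I_n -> 'cV[R]_p) (mu : 'cV[R]_p) (Sigma : 'M[R]_p) : R :=
  Rmult (Rmult (Rmult
    (Rpower (\det Sigma) (Ropp (Rdiv (INR n) 2)))
    (exp (Ropp (Rdiv (\sum_(i < n) qform (invmx Sigma) (X i - mu)) 2))))
    (exp (Ropp (Rdiv (\tr ((invmx (Psi_inv_half *m Sigma *m Psi_inv_half)) ^+ q)) 2))))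
    (Rpower (\det Sigma)
       (Ropp (Rdiv (Rplus (Rplus (Rmult (INR q) m) (INR p)) R1) 2))).

Definition is_piw_MAP (p n q : nat) (m : R) (Psi_inv_half : 'M[R]_p)
    (X : 'I_n -> 'cV[R]_p) (mu : 'cV[R]_p) (Sigma : 'M[R]_p) : Prop :=
  posdef Sigma /\
  forall (mu' : 'cV[R]_p) (Sigma' : 'M[R]_p), posdef Sigma' ->
    Rle (piw_posterior q m Psi_inv_half X mu' Sigma')
        (piw_posterior q m Psi_inv_half X mu Sigma).

(* Main.v *)
Require Import Defs.
From HB Require Import structures.
From Stdlib Require Import Reals Lra Lia.
From mathcomp Require Import all_boot all_algebra zify.

Section RealPart.
Local Open Scope R_scope.


Section Interp.
Variable l : nat -> R.
Hypothesis Hc : forall i, 2 * l (i.+1) <= l i + l (i.+2).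
Let d i := l (i.+1) - l i.

Lemma d_mono i m : d i <= d (i + m).
Proof.
elim: m => [|m IH]; first by rewrite addn0; lra.
have := Hc (i + m); rewrite addnS /d. rewrite /d in IH. lra.
Qed.

Lemma interpA j : l j - l 0 <= INR j * d j.
Proof.
elim: j => [|j IH]; first by rewrite /=; lra.
have h := d_mono j 1; rewrite addn1 in h.
rewrite S_INR. have : l j.+1 - l 0 = (l j - l 0) + d j by rewrite /d; ring.
move=> ->.
have hj := pos_INR j.
have : INR j * d j <= INR j * d j.+1 by apply: Rmult_le_compat_l.
lra.
Qed.

Lemma interpB j m : INR m * d j <= l (j + m) - l j.
Proof.
elim: m => [|m IH]; first by rewrite addn0 /=; lra.
have h := d_mono j m.
rewrite S_INR addnS.
have : l (j + m).+1 - l j = (l (j + m) - l j) + d (j + m) by rewrite /d; ring.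
move=> ->. lra.
Qed.

Lemma interp j m : INR (j + m) * l j <= INR m * l 0 + INR j * l (j + m).
Proof.
have hA := interpA j; have hB := interpB j m.
have hj := pos_INR j; have hm := pos_INR m.
rewrite plus_INR.
have h1 : INR m * (l j - l 0) <= INR m * (INR j * d j) by apply: Rmult_le_compat_l.
have h2 : INR j * (INR m * d j) <= INR j * (l (j + m) - l j) by apply: Rmult_le_compat_l.
nra.
Qed.
End Interp.

Lemma ln_le' x y : 0 < x -> x <= y -> ln x <= ln y.
Proof.
move=> hx hxy; case: (Rle_lt_or_eq_dec _ _ hxy) => h.
  by apply: Rlt_le; apply: ln_increasing.
by subst; apply: Rle_refl.
Qed.

Lemma ln_ge_inv y : 0 < y -> 1 - / y <= ln y.
Proof.
move=> hy.
have h1 : / y <= exp (/ y - 1) by have := exp_ineq1_le (/ y - 1); lra.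
have hy' : 0 < / y by apply: Rinv_0_lt_compat.
have := ln_le' _ _ hy' h1; rewrite ln_exp ln_Rinv //; lra.
Qed.

Lemma ln_lower x : Rabs x <= / 2 -> - x - 2 * (x * x) <= ln (1 - x).
Proof.
move=> hx.
have hx' : - / 2 <= x <= / 2 by move: hx; split_Rabs; lra.
have hy : 0 < 1 - x by lra.
apply: (Rle_trans _ _ _ _ (ln_ge_inv _ hy)).
have e : 1 - / (1 - x) = - x / (1 - x) by field; lra.
rewrite e.
apply: (Rmult_le_reg_r (1 - x)) => //.
have -> : - x / (1 - x) * (1 - x) = - x by field; lra.
nra.
Qed.

Lemma limit0 (eta C L : R) : 0 < eta -> 0 <= C ->
  (forall d, Rabs d <= eta -> d * L <= C * (d * d)) -> L = 0.
Proof.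
move=> he hC H.
case: (Rtotal_order L 0) => [hL|[//|hL]].
- set t := Rmin eta (- L / (C + 1)).
  have ht : 0 < t by apply: Rmin_pos => //; apply: Rdiv_lt_0_compat; lra.
  have ht2 : t <= - L / (C + 1) by apply: Rmin_r.
  have h := H (- t); rewrite Rabs_Ropp Rabs_right in h; last lra.
  have := h (Rmin_l _ _).
  have ht3 : t * (C + 1) <= - L.
    have := Rmult_le_compat_r (C + 1) _ _ (ltac:(lra)) ht2.
    have -> : - L / (C + 1) * (C + 1) = - L by field; lra. done.
  nra.
- set t := Rmin eta (L / (C + 1)).
  have ht : 0 < t by apply: Rmin_pos => //; apply: Rdiv_lt_0_compat; lra.
  have ht2 : t <= L / (C + 1) by apply: Rmin_r.
  have h := H t; rewrite Rabs_right in h; last lra.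
  have := h (Rmin_l _ _).
  have ht3 : t * (C + 1) <= L.
    have := Rmult_le_compat_r (C + 1) _ _ (ltac:(lra)) ht2.
    have -> : L / (C + 1) * (C + 1) = L by field; lra. done.
  nra.
Qed.



Lemma ln_le_inv' x y : 0 < x -> 0 < y -> ln x <= ln y -> x <= y.
Proof.
move=> hx hy h; case: (Rle_lt_dec x y) => // hlt.
have := ln_increasing _ _ hy hlt; lra.
Qed.

Lemma seq_final (a : nat -> R) (q' : nat) (N : R) :
  0 < N ->
  (forall j, 0 < a j) ->
  (forall j, a j.+1 * a j.+1 <= a j * a j.+2) ->
  INR q'.+1 * a q'.+2 <= N * a 1%nat ->
  INR q'.+1 * a q'.+4 <= N * a 3%nat ->
  let beta := Rpower (INR q'.+1 / N) (/ INR q'.+1) in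
  beta * a 2%nat <= a 1%nat /\ INR q'.+1 * a q'.+2 <= N * beta * a 2%nat.
Proof.
move=> HN Ha Hlc H1 H3 beta.
set q := INR q'.+1.
have Hq : 0 < q by rewrite /q; apply: lt_0_INR; lia.
pose l j := ln (a j).
have Hc : forall i, 2 * l i.+1 <= l i + l i.+2.
  move=> i; rewrite /l -ln_mult //.
  have -> : 2 * ln (a i.+1) = ln (a i.+1 * a i.+1) by rewrite ln_mult //; ring.
  apply: ln_le'; [apply: Rmult_lt_0_compat|]; auto.
set B := ln beta.
have HB : q * B = ln q - ln N.
  rewrite /B /beta ln_Rpower /Rdiv ln_mult; last by apply: Rinv_0_lt_compat.
    rewrite ln_Rinv // -/q; field; lra.
  exact: Hq.
have Hbeta : 0 < beta by rewrite /beta /Rpower; apply: exp_pos.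
have lnq1 : ln q + l q'.+2 <= ln N + l 1%nat.
  rewrite /l -!ln_mult //; apply: ln_le' => //; apply: Rmult_lt_0_compat; auto.
have lnq3 : ln q + l q'.+4 <= ln N + l 3%nat.
  rewrite /l -!ln_mult //; apply: ln_le' => //; apply: Rmult_lt_0_compat; auto.
have step_i : forall s, ln q + l (q'.+2 + s)%nat <= ln N + l (1 + s)%nat ->
    B + l (1 + s)%nat <= l s.
  move=> s hs.
  have hI := interp (fun j => l (j + s)%nat) (fun i => Hc (i + s)%nat) 1 q'.+1.
  cbv beta in hI; rewrite add0n in hI.
  have e1 : (1 + q'.+1 + s = q'.+2 + s)%nat by lia.
  rewrite e1 in hI.
  have e2 : INR (1 + q'.+1) = 1 + q by rewrite plus_INR.
  rewrite e2 -/q in hI.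
  have : q * (B + l (1 + s)%nat - l s) <= 0.
    rewrite Rmult_minus_distr_l Rmult_plus_distr_l HB.
    simpl INR in hI. lra.
  move=> h; have : B + l (1 + s)%nat - l s <= 0.
    case: (Rle_lt_dec (B + l (1 + s)%nat - l s) 0) => // hh.
    have := Rmult_lt_0_compat _ _ Hq hh; lra.
  lra.
have i0 : B + l 1%nat <= l 0%nat.
  apply: (step_i 0%nat); by rewrite addn0.
have i2 : B + l 3%nat <= l 2%nat.
  apply: (step_i 2%nat); by have -> : (q'.+2 + 2 = q'.+4)%nat by lia.
have lower : B + l 2%nat <= l 1%nat.
  have := Hc 1%nat; lra.
split.
  apply: ln_le_inv'; [apply: Rmult_lt_0_compat; auto|auto|].
  rewrite ln_mult //; exact lower.
have hI := interp (fun j => l (j + 2)%nat) (fun i => Hc (i + 2)%nat) q' 2.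
cbv beta in hI; rewrite add0n in hI.
have e1 : (q' + 2 + 2 = q'.+4)%nat by lia.
have e2 : (q' + 2 = q'.+2)%nat by lia.
rewrite e1 e2 in hI.
rewrite !S_INR in hI. simpl INR in hI.
have hq' : INR q'.+1 = INR q' + 1 by rewrite S_INR.
have Hl4 : l q'.+4 <= l 2%nat - (INR q' + 2) * B.
  have : q * B = (INR q' + 1) * B by rewrite /q hq'.
  lra.
have hq0 := pos_INR q'.
have key : (INR q' + 2) * (l q'.+2 - l 2%nat + INR q' * B) <= 0.
  have : INR q' * l q'.+4 <= INR q' * (l 2%nat - (INR q' + 2) * B) by apply: Rmult_le_compat_l.
  simpl INR in hI |- *. nra.
have Hl2 : l q'.+2 - l 2%nat + INR q' * B <= 0.
  case: (Rle_lt_dec (l q'.+2 - l 2%nat + INR q' * B) 0) => // hh.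
  have : 0 < INR q' + 2 by lra.
  move=> h2; have := Rmult_lt_0_compat _ _ h2 hh; lra.
apply: ln_le_inv'.
- apply: Rmult_lt_0_compat; auto.
- apply: Rmult_lt_0_compat; auto; apply: Rmult_lt_0_compat; auto.
rewrite !ln_mult //; last by apply: Rmult_lt_0_compat.
rewrite -/(l q'.+2) -/(l 2%nat) -/B.
have : q * B = (INR q' + 1) * B by rewrite /q hq'.
lra.
Qed.

End RealPart.

Import GRing.Theory.
Set Implicit Arguments.
Unset Strict Implicit.
Unset Printing Implicit Defensive.
Local Open Scope R_scope.
Lemma quad_disc (a b c : R) : (0 <= c) -> (forall t, 0 <= a + 2 * t * b + t * t * c) ->
  (b * b <= a * c).
Proof.
move=> Hc H.
have Ha : (0 <= a) by move: (H 0); lra.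
case: (Rle_lt_or_eq_dec 0 c Hc) => Hc'.
- have h := H (- b / c).
  have e : (a + 2 * (- b / c) * b + (- b / c) * (- b / c) * c = (a * c - b * b) / c) by field; lra.
  rewrite e in h.
  have : (0 <= (a * c - b * b) / c * c) by apply: Rmult_le_pos; lra.
  have -> : ((a * c - b * b) / c * c = a * c - b * b) by field; lra.
  lra.
- subst c. case: (Req_dec b 0) => Hb; first by subst; nra.
  have h := H (- (a + 1) / (2 * b)).
  have e : (a + 2 * (- (a + 1) / (2 * b)) * b + (- (a + 1) / (2 * b)) * (- (a + 1) / (2 * b)) * 0 = -1) by field.
  lra.
Qed.

Local Open Scope ring_scope.

Lemma R_fieldP : GRing.field_axiom R.
Proof. move=> x Hx. exact Hx. Qed.
HB.instance Definition _ := GRing.ComUnitRing_isField.Build R R_fieldP.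

Lemma RplusE (x y : R) : x + y = Rplus x y. Proof. by []. Qed.
Lemma RmultE (x y : R) : x * y = Rmult x y. Proof. by []. Qed.
Lemma RoppE (x : R) : - x = Ropp x. Proof. by []. Qed.
Lemma R0E : (0 : R) = R0. Proof. by []. Qed.
Lemma R1E : (1 : R) = R1. Proof. by []. Qed.
Lemma RminusE (x y : R) : x - y = Rminus x y. Proof. by []. Qed.
Lemma RnatE (k : nat) : (k%:R : R) = INR k.
Proof.
elim: k => [//|k IH]. rewrite -addn1 natrD IH plus_INR. by [].
Qed.
Ltac Rsimpl := rewrite ?RminusE ?RplusE ?RmultE ?RoppE ?R0E ?R1E ?RnatE.

Lemma mx11_mulE (A : 'M[R]_(1,1)) (B : 'M[R]_(1,1)) :
  (A *m B) ord0 ord0 = A ord0 ord0 * B ord0 ord0.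
Proof. by rewrite !mxE big_ord1. Qed.

Section Bil.
Variable p : nat.
Implicit Types (G A B : 'M[R]_p) (x y z : 'cV[R]_p).

Definition bil G x y : R := (x^T *m G *m y) ord0 ord0.

Lemma qformE G x : qform G x = bil G x x. Proof. by []. Qed.

Lemma bil_sym G x y : G^T = G -> bil G x y = bil G y x.
Proof.
move=> HG; rewrite /bil.
have -> : (x^T *m G *m y) ord0 ord0 = ((x^T *m G *m y)^T) ord0 ord0 by rewrite [in RHS]mxE.
by rewrite !trmx_mul trmxK HG mulmxA.
Qed.

Lemma bilDl G x y z : bil G (x + y) z = bil G x z + bil G y z.
Proof. by rewrite /bil linearD /= !mulmxDl mxE. Qed.
Lemma bilDr G x y z : bil G z (x + y) = bil G z x + bil G z y.
Proof. by rewrite /bil !mulmxDr mxE. Qed.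
Lemma bilZl G a x y : bil G (a *: x) y = a * bil G x y.
Proof. by rewrite /bil linearZ /= -!scalemxAl mxE. Qed.
Lemma bilZr G a x y : bil G x (a *: y) = a * bil G x y.
Proof. by rewrite /bil -!scalemxAr mxE. Qed.
Lemma bilNl G x y : bil G (- x) y = - bil G x y.
Proof. by rewrite -scaleN1r bilZl mulN1r. Qed.
Lemma bilNr G x y : bil G x (- y) = - bil G x y.
Proof. by rewrite -scaleN1r bilZr mulN1r. Qed.
Lemma bilBl G x y z : bil G (x - y) z = bil G x z - bil G y z.
Proof. by rewrite bilDl bilNl. Qed.
Lemma bilBr G x y z : bil G z (x - y) = bil G z x - bil G z y.
Proof. by rewrite bilDr bilNr. Qed.
Lemma bil_mul A G B x y : bil (A *m G *m B) x y = bil G (A^T *m x) (B *m y).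
Proof. by rewrite /bil trmx_mul trmxK !mulmxA. Qed.
Lemma bil1 x y : bil 1%:M x y = (x^T *m y) ord0 ord0.
Proof. by rewrite /bil mulmx1. Qed.
Lemma bilD G1 G2 x y : bil (G1 + G2) x y = bil G1 x y + bil G2 x y.
Proof. by rewrite /bil mulmxDr mulmxDl mxE. Qed.
Lemma bilZ a G x y : bil (a *: G) x y = a * bil G x y.
Proof. by rewrite /bil -scalemxAr -scalemxAl mxE. Qed.
Lemma bilN G x y : bil (- G) x y = - bil G x y.
Proof. by rewrite -scaleN1r bilZ mulN1r. Qed.
Lemma bil_rank1 (a b : 'cV[R]_p) x y : bil (a *m b^T) x y = (x^T *m a) ord0 ord0 * (b^T *m y) ord0 ord0.
Proof. by rewrite /bil mulmxA -(mulmxA _ _ y) mx11_mulE. Qed.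
Lemma dot_sym (x y : 'cV[R]_p) : (x^T *m y) ord0 ord0 = (y^T *m x) ord0 ord0.
Proof. by rewrite -!bil1 bil_sym // trmx1. Qed.

Lemma cauchy_schwarz G x y : G^T = G -> (forall v, Rle 0 (bil G v v)) ->
  Rle (bil G x y * bil G x y) (bil G x x * bil G y y).
Proof.
move=> Hs Hp; apply: quad_disc => [|t]; first exact: Hp.
have h := Hp (x + t *: y).
rewrite !bilDl !bilDr !bilZl !bilZr (bil_sym y x Hs) in h.
move: h; Rsimpl => h. lra.
Qed.
End Bil.



Section Posdef.
Variable p : nat.
Implicit Types (A B : 'M[R]_p) (v : 'cV[R]_p).

Lemma posdef_unit A : posdef A -> A \in unitmx.
Proof.
case=> _ HA; case Hu: (A \in unitmx) => //; exfalso.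
have Hk : kermx A != 0 by rewrite kermx_eq0 row_free_unit Hu.
have /existsP [i Hi] : [exists i, row i (kermx A) != 0].
  apply: contraNT Hk => /existsPn H; apply/eqP/row_matrixP => i.
  by rewrite row0; apply/eqP; move: (H i); rewrite negbK.
set w := row i (kermx A) in Hi.
have Hw : w *m A = 0 by rewrite /w -row_mul mulmx_ker row0.
have Hv : w^T <> 0.
  move=> h; move/eqP: Hi; apply; by rewrite -(trmxK w) h trmx0.
have := HA _ Hv; rewrite /qform trmxK Hw mul0mx mxE.
by move=> h; apply: (Rlt_irrefl 0).
Qed.

Lemma posdef_inv A : posdef A -> posdef (invmx A).
Proof.
move=> HA; have Hu := posdef_unit HA; case: HA => Hs HA; split.
  by rewrite /Defs.symmetric trmx_inv Hs.
move=> v Hv; rewrite qformE.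
have -> : invmx A = invmx A *m A *m invmx A by rewrite mulVmx // mul1mx.
rewrite bil_mul trmx_inv Hs -qformE; apply: HA.
move=> h; apply: Hv; by rewrite -(mulKVmx Hu v) h mulmx0.
Qed.

Lemma posdef_conj A B : posdef A -> B \in unitmx -> posdef (B^T *m A *m B).
Proof.
case=> Hs HA Hu; split.
  by rewrite /Defs.symmetric !trmx_mul trmxK Hs mulmxA.
move=> v Hv; rewrite qformE bil_mul trmxK -qformE; apply: HA.
move=> h; apply: Hv; by rewrite -(mulKmx Hu v) h mulmx0.
Qed.

Lemma posdef_qform_ge0 A v : posdef A -> Rle 0 (qform A v).
Proof.
case=> _ HA. case: (eqVneq v 0) => [->|Hv].
  by rewrite /qform mulmx0 mxE; apply: Rle_refl.
by apply: Rlt_le; apply: HA; apply/eqP.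
Qed.

Lemma symmetric_inv A : Defs.symmetric A -> Defs.symmetric (invmx A).
Proof. by rewrite /Defs.symmetric trmx_inv => ->. Qed.

End Posdef.



Lemma sum_ge0 (I : finType) (P : pred I) (f : I -> R) :
  (forall i, P i -> Rle 0 (f i)) -> Rle 0 (\sum_(i | P i) f i).
Proof.
move=> H; apply: (big_ind (fun x => Rle 0 x)) => //; first exact: Rle_refl.
by move=> x y hx hy; rewrite RplusE; apply: Rplus_le_le_0_compat.
Qed.

Lemma sum_ge_term (I : finType) (f : I -> R) (j : I) :
  (forall i, Rle 0 (f i)) -> Rle (f j) (\sum_i f i).
Proof.
move=> H; rewrite (bigD1 j) //= RplusE.
have h : Rle 0 (\sum_(i | i != j) f i) by apply: sum_ge0 => i _; exact: H.
rewrite -{1}(Rplus_0_r (f j)); apply: Rplus_le_compat_l; exact: h.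
Qed.

Lemma sum_abs_le (I : finType) (f g : I -> R) :
  (forall i, Rle (Rabs (f i)) (g i)) -> Rle (Rabs (\sum_i f i)) (\sum_i g i).
Proof.
move=> H; apply: (big_rec2 (fun a b => Rle (Rabs a) b)).
  by rewrite Rabs_R0; apply: Rle_refl.
move=> i a b _ h; rewrite !RplusE.
apply: Rle_trans (Rabs_triang _ _) _; apply: Rplus_le_compat => //.
Qed.

Lemma posdef1 p : posdef (1%:M : 'M[R]_p).
Proof.
split; first by rewrite /Defs.symmetric trmx1.
move=> v Hv; rewrite /qform mulmx1 mxE.
have /existsP [k Hk] : [exists k, v k ord0 != 0].
  apply: contraT => /existsPn H; exfalso; apply: Hv; apply/matrixP => i j.
  rewrite (ord1 j) mxE; apply/eqP; move: (H i); by rewrite negbK.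
apply: (Rlt_le_trans _ _ _ _ (@sum_ge_term _ (fun i => v^T ord0 i * v i ord0) k _)).
-
  rewrite mxE RmultE; apply: Rsqr_pos_lt; exact/eqP.
move=> i; rewrite mxE RmultE; apply: Rle_0_sqr.
Qed.

Section Mom.
Variable p : nat.
Variable M : 'M[R]_p.
Hypothesis HM : posdef M.

Definition mom k (v : 'cV[R]_p) := bil (M ^+ k) v v.

Lemma commX k : M *m M ^+ k = M ^+ k *m M.
Proof. by rewrite mulmxE -exprS exprSr. Qed.

Lemma symX k : (M ^+ k)^T = M ^+ k.
Proof.
elim: k => [|k IH]; first by rewrite expr0 trmx1.
rewrite exprS -mulmxE trmx_mul IH. case: HM => -> _. by rewrite commX.
Qed.

Lemma unitX k : M ^+ k \in unitmx.
Proof.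
elim: k => [|k IH]; first by rewrite expr0 unitmx1.
by rewrite exprS -mulmxE unitmx_mul IH (posdef_unit HM).
Qed.

Lemma bil_powE e a b v w :
  bil (M ^+ e) (M ^+ a *m v) (M ^+ b *m w) = bil (M ^+ (a + e + b)) v w.
Proof.
rewrite -{1}(symX a) -bil_mul.
by rewrite !mulmxE -!exprD.
Qed.

Lemma posdefX k : posdef (M ^+ k).
Proof.
rewrite -(odd_double_half k) -addnn; case: (odd k) => /=.
- have -> : M ^+ (1 + (k./2 + k./2)) = (M ^+ k./2)^T *m M *m M ^+ k./2.
    by rewrite symX !mulmxE -exprSr -exprD addSn.
  apply: posdef_conj HM (unitX _).
- have -> : M ^+ (0 + (k./2 + k./2)) = (M ^+ k./2)^T *m 1%:M *m M ^+ k./2.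
    by rewrite symX mulmx1 mulmxE -exprD.
  apply: posdef_conj (posdef1 p) (unitX _).
Qed.

Lemma mom_pos k v : v != 0 -> Rlt 0 (mom k v).
Proof. move=> Hv; case: (posdefX k) => _ H; apply: H; exact/eqP. Qed.

Lemma mom_lc j v :
  Rle (mom j.+1 v * mom j.+1 v) (mom j v * mom j.+2 v).
Proof.
set e := odd j; set i := j./2.
have Hj : j = i + e + i by rewrite /i /e; have := odd_double_half j; rewrite -addnn; lia.
have E1 : mom j.+1 v = bil (M ^+ e) (M ^+ i *m v) (M ^+ i.+1 *m v).
  by rewrite bil_powE /mom; congr (bil (M ^+ _) v v); lia.
have E0 : mom j v = bil (M ^+ e) (M ^+ i *m v) (M ^+ i *m v).
  by rewrite bil_powE /mom; congr (bil (M ^+ _) v v); lia.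
have E2 : mom j.+2 v = bil (M ^+ e) (M ^+ i.+1 *m v) (M ^+ i.+1 *m v).
  by rewrite bil_powE /mom; congr (bil (M ^+ _) v v); lia.
rewrite E0 E1 E2; apply: cauchy_schwarz; first exact: symX.
move=> w; exact: (posdef_qform_ge0 w (posdefX e)).
Qed.

End Mom.



Section Expand.
Variable p : nat.
Variables A B : 'M[R]_p.

Fixpoint Dk k : 'M[R]_p := if k is k'.+1 then Dk k' *m A + A ^+ k' *m B else 0.
Fixpoint Ek k (d : R) : 'M[R]_p :=
  if k is k'.+1 then Ek k' d *m A + Dk k' *m B + d *: (Ek k' d *m B) else 0.

Lemma expand k d : (A + d *: B) ^+ k = A ^+ k + d *: Dk k + (d * d) *: Ek k d.
Proof.
elim: k => [|k IH]; first by rewrite !expr0 /= !scaler0 !addr0.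
rewrite exprSr IH /= -mulmxE.
rewrite !(mulmxDl, mulmxDr) -!scalemxAl -!scalemxAr !scalerA mulmxE -exprSr.
rewrite !scalerDr !scalerA -!addrA; congr (_ + _).
rewrite [LHS]addrCA; congr (_ + _); congr (_ + _); by rewrite [LHS]addrCA.
Qed.

Lemma trDk k j : \tr (Dk k *m A ^+ j) = k%:R * \tr (A ^+ (k + j).-1 *m B).
Proof.
elim: k j => [|k IH] j /=; first by rewrite mul0mx mxtrace0 mul0r.
rewrite mulmxDl -mulmxA mxtraceD.
have -> : A *m A ^+ j = A ^+ j.+1 by rewrite mulmxE -exprS.
rewrite IH [X in _ + X = _]mxtrace_mulC mulmxA !mulmxE -exprD.
have -> : (k + j.+1).-1 = (k + j)%N by lia.
rewrite addnC -[k.+1]addn1 natrD mulrDl mul1r.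
done.
Qed.

Lemma trDk0 k : \tr (Dk k) = k%:R * \tr (A ^+ k.-1 *m B).
Proof. have h := trDk k 0; by rewrite expr0 addn0 mulmxE mulr1 in h. Qed.

Definition bnd (F : R -> 'M[R]_p) := exists C, Rle R0 C /\
  forall d, Rle (Rabs d) R1 -> forall i j, Rle (Rabs (F d i j)) C.

Definition mxabs (X : 'M[R]_p) : R := \sum_i \sum_j Rabs (X i j).

Lemma mxabs_ge (X : 'M[R]_p) (i j : 'I_p) : Rle (Rabs (X i j)) (mxabs X).
Proof.
apply: Rle_trans (@sum_ge_term _ (fun j => Rabs (X i j)) j _) _.
  by move=> k; apply: Rabs_pos.
apply: (@sum_ge_term _ (fun i => \sum_j Rabs (X i j)) i).
by move=> k; apply: sum_ge0 => l _; apply: Rabs_pos.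
Qed.

Lemma mxabs_ge0 (X : 'M[R]_p) : Rle 0 (mxabs X).
Proof. by apply: sum_ge0 => i _; apply: sum_ge0 => j _; apply: Rabs_pos. Qed.

Lemma bnd_const (X : 'M[R]_p) : bnd (fun _ => X).
Proof. exists (mxabs X); split; [exact: mxabs_ge0| move=> d _ i j; exact: mxabs_ge]. Qed.

Lemma bnd_add F G : bnd F -> bnd G -> bnd (fun d => F d + G d).
Proof.
move=> [C [HC HF]] [D [HD HG]]; exists (Rplus C D); split; first lra.
move=> d hd i j; rewrite mxE RplusE.
apply: Rle_trans (Rabs_triang _ _) _; apply: Rplus_le_compat; auto.
Qed.

Lemma bnd_scale F : bnd F -> bnd (fun d => d *: F d).
Proof.
move=> [C [HC HF]]; exists C; split => // d hd i j; rewrite mxE RmultE Rabs_mult.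
have h3 := HF d hd i j; have h2 := Rabs_pos (F d i j).
apply: Rle_trans (Rmult_le_compat_r _ _ _ h2 hd) _; rewrite Rmult_1_l; exact: h3.
Qed.

Lemma bnd_mulr F (X : 'M[R]_p) : bnd F -> bnd (fun d => F d *m X).
Proof.
move=> [C [HC HF]]; exists (\sum_(l < p) (C * mxabs X))%R; split.
  by apply: sum_ge0 => l _; apply: Rmult_le_pos => //; exact: mxabs_ge0.
move=> d hd i j; rewrite mxE; apply: sum_abs_le => l.
rewrite RmultE Rabs_mult; apply: Rmult_le_compat; try exact: Rabs_pos.
  exact: HF.
exact: mxabs_ge.
Qed.

Lemma bnd_Ek k : bnd (Ek k).
Proof.
elim: k => [|k IH] /=.
  exists 0%R; split; first exact: Rle_refl.
  by move=> d _ i j; rewrite mxE Rabs_R0; apply: Rle_refl.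
apply: bnd_add; first apply: bnd_add.
- exact: bnd_mulr.
- exact: bnd_const.
- apply: (bnd_scale (F := fun d => Ek k d *m B)); exact: bnd_mulr.
Qed.

Lemma bnd_tr F : bnd F -> exists C, Rle R0 C /\
  forall d, Rle (Rabs d) R1 -> Rle (Rabs (\tr (F d))) C.
Proof.
move=> [C [HC HF]]; exists (\sum_(i < p) C)%R; split.
  by apply: sum_ge0.
move=> d hd; rewrite /mxtrace; apply: sum_abs_le => i; exact: HF.
Qed.
End Expand.



Lemma invmx_eq p (A B : 'M[R]_p) : A *m B = 1%:M -> invmx A = B.
Proof.
move=> h; have [uA uB] := mulmx1_unit h.
by rewrite -[invmx A]mulmx1 -h mulmxA mulVmx // mul1mx.
Qed.

Lemma det_rank1 p (a b : 'cV[R]_p) : \det (1%:M - a *m b^T) = 1 - (b^T *m a) ord0 ord0.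
Proof.
pose L : 'M[R]_(p + 1) := block_mx 1%:M 0 b^T 1%:M.
pose Rr : 'M[R]_(p + 1) := block_mx 1%:M a 0 (1%:M - b^T *m a).
pose L2 : 'M[R]_(p + 1) := block_mx (1%:M - a *m b^T) a 0 1%:M.
have E : L *m Rr = L2 *m L.
  rewrite /L /Rr /L2 !mulmx_block !(mul1mx, mulmx1, mul0mx, mulmx0, addr0, add0r).
  by rewrite subrK addrC subrK.
have := congr1 determinant E.
rewrite !det_mulmx /L /Rr /L2 det_lblock det_ublock det_ublock !det1 !mul1r !mulr1.
rewrite det_mx11 => <-. by rewrite !mxE /=.
Qed.

Section Pert.
Variable p : nat.
Variables (Sg : 'M[R]_p) (u : 'cV[R]_p) (d : R).
Hypothesis HS : posdef Sg.
Let Sgi := invmx Sg.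
Let k := qform Sg u.
Definition Wp := Sgi - d *: (u *m u^T).

Lemma uS : Sg \in unitmx. Proof. exact: posdef_unit. Qed.
Lemma symS : Sg^T = Sg. Proof. by case: HS. Qed.
Lemma symSi : Sgi^T = Sgi. Proof. by rewrite /Sgi trmx_inv symS. Qed.

Lemma bilSi_Su (x : 'cV[R]_p) : bil Sgi (Sg *m u) x = (u^T *m x) ord0 ord0.
Proof. by rewrite /bil trmx_mul symS -(mulmxA u^T) /Sgi mulmxV ?uS // mulmx1. Qed.

Lemma qformWp x : qform Wp x = qform Sgi x - d * ((u^T *m x) ord0 ord0 * (u^T *m x) ord0 ord0).
Proof.
rewrite /Wp qformE bilD bilN bilZ bil_rank1 dot_sym. by [].
Qed.

Lemma Wp_posdef : Rlt (d * k) R1 -> posdef Wp.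
Proof.
move=> Hdk; split.
  rewrite /Defs.symmetric /Wp linearB /= linearZ /= symSi trmx_mul trmxK. by [].
move=> x Hx; rewrite qformWp.
have HSi : posdef Sgi by apply: posdef_inv.
have HQ : Rlt 0 (qform Sgi x) by case: HSi => _ h; exact: h.
have Hcs := cauchy_schwarz (Sg *m u) x symSi (fun v => posdef_qform_ge0 v HSi).
rewrite !bilSi_Su in Hcs.
have Ek : (u^T *m (Sg *m u)) ord0 ord0 = k by rewrite /k /qform mulmxA.
rewrite Ek -qformE in Hcs.
move: Hcs HQ Hdk; set s := (u^T *m x) ord0 ord0; set Q := qform Sgi x.
rewrite /k; set kk := qform Sg u.
have Hk : Rle 0 kk by apply: posdef_qform_ge0.
Rsimpl => Hcs HQ Hdk.
case: (Rle_lt_dec d 0) => hd.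
  have : Rle 0 (Rmult (Ropp d) (Rmult s s)) by apply: Rmult_le_pos; nra.
  nra.
have : Rle (Rmult d (Rmult s s)) (Rmult d (Rmult kk Q)) by apply: Rmult_le_compat_l; lra.
nra.
Qed.
End Pert.



Lemma exp_le_inv' (x y : R) : Rle (exp x) (exp y) -> Rle x y.
Proof.
move=> h; case: (Rle_lt_dec x y) => // hlt.
have := exp_increasing _ _ hlt; lra.
Qed.

Lemma ln_nonpos (x : R) : Rle x R0 -> ln x = R0.
Proof. move=> h; rewrite /ln; case: Rlt_dec => // hh; exfalso; lra. Qed.

Section Main.
Variables (p n q : nat) (m : R) (P : 'M[R]_p) (X : 'I_n -> 'cV[R]_p) (mu : 'cV[R]_p).

Definition Nq : R := Rplus (INR n) (Rplus (Rplus (Rmult (INR q) m) (INR p)) R1).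

Definition Phi (Sigma : 'M[R]_p) : R :=
  Rminus (Rminus (Rmult (Ropp (Rdiv Nq 2)) (ln (\det Sigma)))
     (Rdiv (\sum_(i < n) qform (invmx Sigma) (X i - mu)) 2))
     (Rdiv (\tr ((invmx (invmx P *m Sigma *m invmx P)) ^+ q)) 2).

Lemma piwE Sigma : piw_posterior q m (invmx P) X mu Sigma = exp (Phi Sigma).
Proof.
rewrite /piw_posterior /Phi /Rpower -!exp_plus; f_equal.
set D := ln _. set S := bigop.body _ _ _. set T := mxtrace _.
rewrite /Nq; field.
Qed.


Variable Sg : 'M[R]_p.
Hypothesis HP : posdef P.
Hypothesis HSg : posdef Sg.

Definition Sgi := invmx Sg.
Definition Mm := P *m Sgi *m P.
Definition Aq (u : 'cV[R]_p) :=
  \sum_(i < n) ((u^T *m (X i - mu)) ord0 ord0 * (u^T *m (X i - mu)) ord0 ord0).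

Lemma uP : P \in unitmx. Proof. exact: posdef_unit. Qed.
Lemma symP : P^T = P. Proof. by case: HP. Qed.

Section Pt.
Variables (u : 'cV[R]_p) (d : R).
Hypothesis Hdk : Rlt (d * qform Sg u) R1.

Definition Wd := Wp Sg u d.
Definition Sgd := invmx Wd.

Lemma Wd_posdef : posdef Wd. Proof. exact: Wp_posdef. Qed.
Lemma uW : Wd \in unitmx. Proof. exact: posdef_unit Wd_posdef. Qed.
Lemma Sgd_posdef : posdef Sgd. Proof. exact: posdef_inv Wd_posdef. Qed.

Lemma sum_pert : \sum_(i < n) qform (invmx Sgd) (X i - mu) =
   \sum_(i < n) qform Sgi (X i - mu) - d * Aq u.
Proof.
rewrite /Sgd invmxK /Aq mulr_sumr -sumrB; apply: eq_bigr => i _.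
by rewrite /Wd qformWp.
Qed.

Lemma tr_pert : let z := P *m u in
  \tr ((invmx (invmx P *m Sgd *m invmx P)) ^+ q) =
  \tr (Mm ^+ q) + d * \tr (Dk Mm (- (z *m z^T)) q)
   + (d * d) * \tr (Ek Mm (- (z *m z^T)) q d).
Proof.
move=> z.
have -> : invmx (invmx P *m Sgd *m invmx P) = P *m Wd *m P.
  apply: invmx_eq.
  rewrite -!mulmxA (mulmxA (invmx P) P) mulVmx ?uP // mul1mx.
  by rewrite (mulmxA Sgd) /Sgd mulVmx ?uW // mul1mx mulVmx ?uP.
have -> : P *m Wd *m P = Mm + d *: (- (z *m z^T)).
  rewrite /Wd /Wp mulmxBr mulmxBl /Mm /Sgi; congr (_ + _).
  rewrite -scalemxAr -scalemxAl scalerN; congr (- (d *: _)).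
  by rewrite /z trmx_mul symP !mulmxA.
by rewrite expand !mxtraceD !mxtraceZ.
Qed.

Lemma det_pert : \det Sgd = Rmult (\det Sg) (Rinv (Rminus R1 (d * qform Sg u))).
Proof.
have HW : Wd = Sgi *m (1%:M - (d *: (Sg *m u)) *m u^T).
  rewrite /Sgi mulmxBr mulmx1 -scalemxAl -scalemxAr !mulmxA mulVmx ?uS //.
  by rewrite mul1mx /Wd /Wp.
have Hd : \det Sg != 0 by rewrite -unitfE -unitmxE uS.
rewrite /Sgd det_inv HW det_mulmx det_rank1 /Sgi det_inv.
have -> : (u^T *m (d *: (Sg *m u))) ord0 ord0 = d * qform Sg u.
  by rewrite -scalemxAr mxE /qform mulmxA.
have h1 : Rminus R1 (d * qform Sg u) <> R0 by move: Hdk; Rsimpl; lra.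
have -> : (1 - d * qform Sg u) = Rminus R1 (d * qform Sg u) by [].
rewrite /GRing.inv /= /R_inv.
have -> : (\det Sg == 0) = false by apply/negbTE.
set D := \det Sg. set e := Rminus _ _.
have hD : D <> R0 by move=> h; move/eqP: Hd; apply.
have -> : (Rinv D * e == 0) = false.
  apply/negbTE/eqP => h; apply: h1; rewrite /e.
  have := Rmult_integral _ _ h; case => //; move/Rinv_neq_0_compat: hD => //.
rewrite RmultE Rinv_mult Rinv_inv. by [].
Qed.
End Pt.

Hypothesis Hm : Rle R0 m.
Hypothesis Hmax : forall S', posdef S' ->
  Rle (piw_posterior q m (invmx P) X mu S') (piw_posterior q m (invmx P) X mu Sg).

Lemma Nq_ge0 : Rle R0 Nq.
Proof.
rewrite /Nq; have := pos_INR n; have := pos_INR p; have := pos_INR q.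
move=> h1 h2 h3; have := Rmult_le_pos _ _ h1 Hm; lra.
Qed.

Lemma phi_le u d : Rlt (d * qform Sg u) R1 -> Rle (Phi (Sgd u d)) (Phi Sg).
Proof.
move=> hd; apply: exp_le_inv'; rewrite -!piwE; apply: Hmax; exact: Sgd_posdef.
Qed.

Lemma trD_eq (z : 'cV[R]_p) :
  \tr (Dk Mm (- (z *m z^T)) q) = - (q%:R * mom Mm q.-1 z).
Proof.
rewrite trDk0 mulmxN raddfN /= mulmxA mxtrace_mulC trace_mx11 /mom /bil mulrN mulmxA.
by []. Qed.

Lemma stat u :
  let c := if Rlt_dec R0 (\det Sg) then R1 else R0 in
  Rplus (Aq u) (Rmult (INR q) (mom Mm q.-1 (P *m u))) = Rmult (Rmult c Nq) (qform Sg u).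
Proof.
move=> c.
set z := P *m u; set k := qform Sg u; set b := mom Mm q.-1 z; set A := Aq u.
have Hk : Rle R0 k by apply: posdef_qform_ge0.
have [C [HC HCb]] := bnd_tr (bnd_Ek Mm (- (z *m z^T)) q).
have Hc : c = R1 \/ c = R0 by rewrite /c; case: Rlt_dec; [left|right].
have HN := Nq_ge0.
have HA : Rle R0 A.
  by apply: sum_ge0 => i _; rewrite RmultE; apply: Rle_0_sqr.
suff : Rminus (Rplus A (Rmult (INR q) b)) (Rmult (Rmult c Nq) k) = R0 by lra.
pose eta := Rinv (Rmult 2 (Rplus k 1)).
have Heta : Rlt R0 eta by rewrite /eta; apply: Rinv_0_lt_compat; lra.
apply: (@limit0 eta (Rplus (Rmult (Rmult 2 Nq) (Rmult k k)) C)) => //.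
  by have := Rmult_le_pos _ _ HN (Rmult_le_pos _ _ Hk Hk); lra.
move=> d hd.
have hd1 : Rle (Rabs d) R1.
  apply: Rle_trans hd _; rewrite /eta.
  have hk1 : Rlt R0 (Rmult 2 (Rplus k 1)) by lra.
  apply: (Rmult_le_reg_l (Rmult 2 (Rplus k 1))) => //.
  rewrite Rinv_r; lra.
have hdk : Rle (Rabs (Rmult d k)) (Rinv 2).
  rewrite Rabs_mult (Rabs_right k); last lra.
  have : Rle (Rmult (Rabs d) k) (Rmult eta k) by apply: Rmult_le_compat_r.
  have : Rle (Rmult eta k) (Rinv 2).
    rewrite /eta Rinv_mult.
    have hk1 : Rlt R0 (Rplus k 1) by lra.
    have : Rle (Rmult (Rinv (Rplus k 1)) k) R1.
      apply: (Rmult_le_reg_l (Rplus k 1)) => //.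
      rewrite -Rmult_assoc Rinv_r; lra.
    have := Rinv_0_lt_compat _ hk1. move=> h0 h1.
    have : Rlt R0 (Rinv 2) by lra.
    nra.
  lra.
have hdk1 : Rlt (d * k) R1 by move: hdk; Rsimpl; split_Rabs; lra.
have h := phi_le hdk1.
rewrite /Phi sum_pert // tr_pert // det_pert // -/k trD_eq -/z -/b in h.
have hE := HCb d hd1.
set E := \tr (Ek Mm (- (z *m z^T)) q d) in h hE.
set S := \sum_(i < n) qform Sgi (X i - mu) in h.
set T := \tr (Mm ^+ q) in h.
have HM : invmx (invmx P *m Sg *m invmx P) = Mm.
  apply: invmx_eq; rewrite /Mm /Sgi -!mulmxA (mulmxA (invmx P) P) mulVmx ?uP // mul1mx.
  by rewrite (mulmxA Sg) mulmxV ?uS // mul1mx mulVmx ?uP.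
rewrite HM -/T -/A in h.
have hl : Rle (Rminus (Ropp (Rmult d k)) (Rmult 2 (Rmult (Rmult d k) (Rmult d k)))) (ln (Rminus R1 (Rmult d k))) := ln_lower _ hdk.
set L1 := ln (Rminus R1 (Rmult d k)) in hl.
have hln : ln (Rmult (\det Sg) (Rinv (Rminus R1 (d * k)))) = Rminus (ln (\det Sg)) (Rmult c L1).
  have hpos : Rlt R0 (Rminus R1 (Rmult d k)) by lra.
  rewrite /c; case: Rlt_dec => hD.
    rewrite ln_mult //; last by apply: Rinv_0_lt_compat.
    rewrite ln_Rinv // /L1; rewrite /=; ring.
  have hD' : Rle (\det Sg) R0 by lra.
  rewrite /= !ln_nonpos //; first by ring.
  have := Rinv_0_lt_compat _ hpos; move=> h0.
  have := Rmult_le_compat_r _ _ _ (Rlt_le _ _ h0) hD'; rewrite Rmult_0_l. by [].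
rewrite hln in h.
move: h; rewrite /Rminus /Rdiv. Rsimpl => h.
have hE2 : Rle (Rmult (Rmult d d) E) (Rmult (Rmult d d) C).
  apply: Rmult_le_compat_l; first by nra.
  by move: hE; split_Rabs; lra.
have hcl : Rle (Rmult (Rmult c Nq) (Ropp (Rplus (Rmult d k) (Rmult 2 (Rmult (Rmult d k) (Rmult d k)))))) (Rmult (Rmult c Nq) L1).
  apply: Rmult_le_compat_l; first by case: Hc => ->; lra.
  lra.
have hk2 : Rle (Rmult (Rmult c Nq) (Rmult (Rmult d d) (Rmult k k))) (Rmult Nq (Rmult (Rmult d d) (Rmult k k))).
  apply: Rmult_le_compat_r; first by nra.
  by case: Hc => ->; lra.
lra.
Qed.
End Main.



Lemma bil0r p (G : 'M[R]_p) x : bil G x 0 = 0.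
Proof. by rewrite /bil mulmx0 mxE. Qed.
Lemma bil0l p (G : 'M[R]_p) x : bil G 0 x = 0.
Proof. by rewrite /bil trmx0 !mul0mx mxE. Qed.

Lemma bil_suml p (G : 'M[R]_p) (I : finType) (f : I -> 'cV[R]_p) y :
  bil G (\sum_i f i) y = \sum_i bil G (f i) y.
Proof.
apply: (big_morph (fun x => bil G x y)); last exact: bil0l.
by move=> a b; rewrite bilDl.
Qed.

Lemma bil_sumG p (I : finType) (G : I -> 'M[R]_p) x y :
  bil (\sum_i G i) x y = \sum_i bil (G i) x y.
Proof.
apply: (big_morph (fun H => bil H x y)).
  by move=> a b; rewrite bilD.
by rewrite /bil mulmx0 mul0mx mxE.
Qed.

Section Fin.
Variables (p n q : nat) (m : R) (P : 'M[R]_p) (X : 'I_n -> 'cV[R]_p) (mu : 'cV[R]_p) (Sg : 'M[R]_p).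
Hypothesis HP : posdef P.
Hypothesis HSg : posdef Sg.
Hypothesis Hm : Rle R0 m.
Hypothesis Hq : (0 < q)%N.
Hypothesis Hmax : forall S', posdef S' ->
  Rle (piw_posterior q m (invmx P) X mu S') (piw_posterior q m (invmx P) X mu Sg).

Let M := Mm P Sg.
Lemma HMp : posdef M.
Proof.
rewrite /M /Mm /Sgi; have {1}-> : P = P^T by case: HP.
apply: posdef_conj; [exact: posdef_inv|exact: posdef_unit].
Qed.

Lemma Aq0 : Aq X mu 0 = 0.
Proof. by rewrite /Aq big1 // => i _; rewrite trmx0 mul0mx mxE mul0r. Qed.

Lemma Aq_ge0 u : Rle R0 (Aq X mu u).
Proof. by apply: sum_ge0 => i _; rewrite RmultE; apply: Rle_0_sqr. Qed.

Lemma stat_full u :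
  Rplus (Aq X mu u) (Rmult (INR q) (mom M q.-1 (P *m u))) = Rmult (Nq p n q m) (qform Sg u).
Proof.
have := stat HP HSg Hm Hmax u.
case: Rlt_dec => /= _; first by rewrite Rmult_1_l.
rewrite Rmult_0_l Rmult_0_l => h.
case: (eqVneq u 0) => [->|hu].
  by rewrite Aq0 mulmx0 /mom qformE !bil0r !Rmult_0_r Rplus_0_l.
exfalso.
have hPu : P *m u != 0.
  apply: contraNneq hu => h0; by rewrite -(mulKmx (posdef_unit HP) u) h0 mulmx0.
have := mom_pos HMp q.-1 hPu; rewrite -/M.
have := Aq_ge0 u; have : Rlt R0 (INR q) by apply: lt_0_INR; lia.
move=> h1 h2 h3; have := Rmult_lt_0_compat _ _ h1 h3; move: h; rewrite -/M. lra.
Qed.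

Lemma mom_shift x j : mom M j (M *m x) = mom M j.+2 x.
Proof.
have := bil_powE HMp j 1 1 x x; rewrite expr1 /mom => ->.
by have -> : (1 + j + 1 = j.+2)%N by lia.
Qed.

Lemma qSg x : qform Sg (invmx Sg *m (P *m x)) = mom M 1 x.
Proof.
rewrite qformE mulmxA -{1}(trmxK (invmx Sg *m P)) -bil_mul /mom expr1.
rewrite trmx_mul trmx_inv.
have -> : Sg^T = Sg by case: HSg.
have -> : P^T = P by case: HP.
rewrite -!mulmxA (mulmxA (invmx Sg) Sg) mulVmx ?(posdef_unit HSg) // mul1mx.
by rewrite /M /Mm /Sgi mulmxA.
Qed.

Lemma vec_rel x :
  Rmult (Nq p n q m) (mom M 1 x) =
  Rplus (Aq X mu (invmx Sg *m (P *m x))) (Rmult (INR q) (mom M q.+1 x)).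
Proof.
rewrite -qSg -stat_full; congr (Rplus _ (Rmult _ _)).
rewrite !mulmxA.
have -> : P *m invmx Sg *m P = M by [].
rewrite mom_shift.
by have -> : (q.-1.+2 = q.+1)%N by lia.
Qed.
End Fin.



Lemma qform_add p (G : 'M[R]_p) (a c : 'cV[R]_p) : G^T = G ->
  qform G (a + c) = qform G a + 2%:R * bil G a c + qform G c.
Proof.
move=> HG; rewrite !qformE bilDl !bilDr (bil_sym c a HG).
by rewrite mulr2n mulrDl mul1r !addrA.
Qed.

Section Mean.
Variables (p n : nat) (X : 'I_n -> 'cV[R]_p).
Hypothesis Hn : (0 < n)%N.

Lemma INRn_neq0 : INR n <> R0.
Proof. apply: not_0_INR; lia. Qed.

Lemma sum_dev : \sum_(i < n) (X i - sample_mean X) = 0.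
Proof.
rewrite sumrB sumr_const card_ord -scaler_nat /sample_mean scalerA RnatE.
have -> : INR n * Rinv (INR n) = 1 by rewrite RmultE Rinv_r //; exact: INRn_neq0.
by rewrite scale1r subrr.
Qed.

Lemma sum_qform_split (G : 'M[R]_p) (mu : 'cV[R]_p) : G^T = G ->
  \sum_(i < n) qform G (X i - mu) =
  \sum_(i < n) qform G (X i - sample_mean X) + INR n * qform G (sample_mean X - mu).
Proof.
move=> HG; set c := sample_mean X - mu.
have E : forall i, qform G (X i - mu) =
   qform G (X i - sample_mean X) + 2%:R * bil G (X i - sample_mean X) c + qform G c.
  move=> i.
  have -> : X i - mu = (X i - sample_mean X) + c by rewrite /c addrA subrK.
  by rewrite qform_add.
rewrite (eq_bigr _ (fun i _ => E i)) !big_split /=.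
rewrite -mulr_sumr -bil_suml sum_dev bil0l mulr0 addr0.
by rewrite sumr_const card_ord -mulr_natl RnatE.
Qed.

Lemma cov_qform (u : 'cV[R]_p) :
  INR n * qform (sample_cov X) u =
  \sum_(i < n) ((u^T *m (X i - sample_mean X)) ord0 ord0 *
                (u^T *m (X i - sample_mean X)) ord0 ord0).
Proof.
rewrite /sample_cov qformE bilZ bil_sumG mulrA.
have -> : INR n * Rinv (INR n) = 1 by rewrite RmultE Rinv_r //; exact: INRn_neq0.
rewrite mul1r; apply: eq_bigr => i _.
by rewrite bil_rank1 dot_sym.
Qed.
End Mean.

Lemma mean_eq p n q (m : R) (P : 'M[R]_p) (X : 'I_n -> 'cV[R]_p) (mu : 'cV[R]_p) (Sg : 'M[R]_p) :
  (0 < n)%N -> posdef Sg ->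
  (forall mu' S', posdef S' ->
     Rle (piw_posterior q m (invmx P) X mu' S') (piw_posterior q m (invmx P) X mu Sg)) ->
  mu = sample_mean X.
Proof.
move=> Hn HSg Hmap.
have h0 := Hmap (sample_mean X) Sg HSg.
rewrite !piwE in h0. have h := exp_le_inv' h0.
have HSi := posdef_inv HSg.
have HG : (invmx Sg)^T = invmx Sg by case: HSi.
move: h; rewrite /Phi (sum_qform_split X Hn mu HG).
set D := ln _; set S0 := \sum_(i < n) _; set T := \tr _.
set Q := qform _ _.
have HQ : Rle R0 Q by apply: posdef_qform_ge0.
have Hn' : Rlt R0 (INR n) by apply: lt_0_INR; lia.
Rsimpl => h.
have HQ0 : Q = R0.
  have : Rle (Rmult (INR n) Q) R0 by lra.
  move=> h2; case: (Rle_lt_or_eq_dec _ _ HQ) => // hq.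
  have := Rmult_lt_0_compat _ _ Hn' hq; lra.
case: (eqVneq (sample_mean X - mu) 0) => [/eqP|hne].
  by rewrite subr_eq0 => /eqP.
have hne2 : sample_mean X - mu <> 0 by apply/eqP.
case: HSi => _ H; have := H _ hne2; rewrite -/Q HQ0 => /Rlt_irrefl [].
Qed.



Lemma qform_delta p (A : 'M[R]_p) i : qform A (delta_mx i ord0) = A i i.
Proof.
rewrite /qform trmx_delta -mulmxA -colE -rowE !mxE. by [].
Qed.

Lemma qform0 p (A : 'M[R]_p) : qform A 0 = 0.
Proof. by rewrite qformE bil0r. Qed.

Lemma sym_cov p n (X : 'I_n -> 'cV[R]_p) : (sample_cov X)^T = sample_cov X.
Proof.
rewrite /sample_cov linearZ /= linear_sum /=; congr (_ *: _).
by apply: eq_bigr => i _; rewrite trmx_mul trmxK.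
Qed.

Lemma qformB p (A B : 'M[R]_p) w : qform (A - B) w = qform A w - qform B w.
Proof. by rewrite !qformE bilD bilN. Qed.
Lemma qformD p (A B : 'M[R]_p) w : qform (A + B) w = qform A w + qform B w.
Proof. by rewrite !qformE bilD. Qed.
Lemma qformZ p a (A : 'M[R]_p) w : qform (a *: A) w = a * qform A w.
Proof. by rewrite !qformE bilZ. Qed.

Theorem mainTheorem9 (p n q : nat) (m : R) (Psi Psi_half : 'M[R]_p)
    (X : 'I_n -> 'cV[R]_p) (mu_hat : 'cV[R]_p) (Sigma_hat : 'M[R]_p) :
  posdef Psi ->
  posdef Psi_half -> Psi_half *m Psi_half = Psi ->
  Rle (INR p) m ->
  (0 < q)%N ->
  is_piw_MAP q m (invmx Psi_half) X mu_hat Sigma_hat ->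
  let N := Rplus (Rplus (Rplus (INR n) (INR p)) (Rmult (INR q) m)) R1 in
  let beta := Rpower (Rdiv (INR q) N) (Rinv (INR q)) in
  let gamma := Rdiv (INR n) N in
  loewner_le (beta *: Psi) Sigma_hat /\
  loewner_le Sigma_hat (beta *: Psi + gamma *: sample_cov X) /\
  (forall i : 'I_p,
     Rle (Rmult beta (Psi i i)) (Sigma_hat i i) /\
     Rle (Sigma_hat i i)
         (Rplus (Rmult beta (Psi i i)) (Rmult gamma (sample_cov X i i)))).
Proof.
move=> HPsi HP HPP Hpm Hq [HSg Hmap] N beta gamma.
have Hm : Rle R0 m by have := pos_INR p; lra.
have Hmax : forall S', posdef S' ->
  Rle (piw_posterior q m (invmx Psi_half) X mu_hat S')
      (piw_posterior q m (invmx Psi_half) X mu_hat Sigma_hat).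
  by move=> S' h; exact: Hmap.
have HN : N = Nq p n q m by rewrite /N /Nq; ring.
have HNpos : Rlt R0 N.
  rewrite /N; have := pos_INR n; have := pos_INR p; have := pos_INR q.
  move=> h1 h2 h3; have := Rmult_le_pos _ _ h1 Hm; lra.
set M := Mm Psi_half Sigma_hat.
set S := sample_cov X.
have HAq : forall u, Aq X mu_hat u = Rmult (INR n) (qform S u).
  move=> u; case: (posnP n) => Hn.
    subst n; by rewrite /Aq big_ord0 /= Rmult_0_l.
  rewrite -RmultE /S cov_qform // /Aq (mean_eq Hn HSg Hmap). by [].
have key : forall w,
  Rle (Rmult beta (qform Psi w)) (qform Sigma_hat w) /\
  Rle (qform Sigma_hat w) (Rplus (Rmult beta (qform Psi w)) (Rmult gamma (qform S w))).
  move=> w.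
  case: (eqVneq w 0) => [->|hw].
    by rewrite !qform0 !Rmult_0_r Rplus_0_r; split; apply: Rle_refl.
  have uP := posdef_unit HP; have uS := posdef_unit HSg.
  set v := invmx Psi_half *m (Sigma_hat *m w).
  have Hw1 : invmx Sigma_hat *m (Psi_half *m v) = w by rewrite /v mulKVmx // mulKmx.
  have hv : v != 0.
    apply: contraNneq hw => h0; by rewrite -Hw1 h0 !mulmx0.
  have HM := HMp HP HSg.
  have Hw2 : qform Sigma_hat w = mom M 1 v by rewrite -{1}Hw1 (qSg HP HSg).
  have HMv : M *m v = Psi_half *m w.
    rewrite /M /Mm /Sgi /v !mulmxA -(mulmxA _ Psi_half) mulmxV // mulmx1.
    by rewrite -(mulmxA _ (invmx Sigma_hat)) mulVmx // mulmx1.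
  have Hw3 : qform Psi w = mom M 2 v.
    rewrite -(@mom_shift _ q _ _ HP HSg Hq) -/M HMv /mom expr0 -HPP /qform /bil.
    have HsPh : Psi_half^T = Psi_half by case: HP.
    by rewrite trmx_mul HsPh !mulmxA mulmx1.
  have Hrel := vec_rel HP HSg Hm Hq Hmax v.
  rewrite Hw1 -/M in Hrel.
  have Hrel3 := vec_rel HP HSg Hm Hq Hmax (M *m v).
  rewrite -/M !(@mom_shift _ q _ _ HP HSg Hq) -/M in Hrel3.
  have [q' Eq] : exists q', q = q'.+1 by exists q.-1; lia.
  have Ha0 : forall u, Rle R0 (Aq X mu_hat u).
    by move=> u; apply: sum_ge0 => i _; rewrite RmultE; apply: Rle_0_sqr.
  have H1 : Rle (Rmult (INR q'.+1) (mom M q'.+2 v)) (Rmult (Nq p n q m) (mom M 1 v)).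
    rewrite Hrel -Eq; have := Ha0 w; lra.
  have H3 : Rle (Rmult (INR q'.+1) (mom M q'.+4 v)) (Rmult (Nq p n q m) (mom M 3 v)).
    rewrite Hrel3 -Eq; have := Ha0 (invmx Sigma_hat *m (Psi_half *m (M *m v))). lra.
  have := seq_final (fun j => mom M j v) q' (Nq p n q m).
  rewrite -HN => /(_ HNpos (fun j => mom_pos HM j hv) (fun j => mom_lc HM j v) _ _).
  move=> /(_ ltac:(rewrite HN; exact: H1) ltac:(rewrite HN; exact: H3)).
  rewrite -Eq -/beta => -[hlo hup].
  rewrite Hw2 Hw3; split; first exact: hlo.
  have HAw := HAq w.
  have hg : Rmult gamma N = INR n by rewrite /gamma; field; lra.
  have HrelN : Rmult N (mom M 1 v) = Rplus (Aq X mu_hat w) (Rmult (INR q) (mom M q.+1 v)).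
    by rewrite HN.
  rewrite Eq in HrelN hup.
  apply: (Rmult_le_reg_l N) => //.
  rewrite Rmult_plus_distr_l -(Rmult_assoc N gamma) (Rmult_comm N gamma) hg.
  move: HrelN hup HAw; Rsimpl => h1 h2 h3.
  rewrite h3 in h1. lra.
have HsS : Sigma_hat^T = Sigma_hat by case: HSg.
have HsP : Psi^T = Psi by case: HPsi.
split; [|split].
- split.
    by rewrite /Defs.symmetric linearB /= linearZ /= HsS HsP.
  move=> w; rewrite qformB qformZ; have [h _] := key w; move: h; Rsimpl; lra.
- split.
    have HsC : S^T = S := sym_cov X.
    by rewrite /Defs.symmetric linearB /= linearD /= linearZ /= linearZ /= HsS HsP HsC.
  move=> w; rewrite qformB qformD (qformZ beta Psi) (qformZ gamma S); have [_ h] := key w; move: h; Rsimpl; lra.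
- move=> i; have := key (delta_mx i ord0); rewrite !qform_delta. by [].
Qed.
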